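(* Let $n\in\mathbb{N}$, $n\geq 2$, let $l\in(0,\frac{2}{n})$ and let $\alpha$ satisfy $\frac{2}{n}\leq\alpha<1+\frac{1}{n}-\frac{l}{2}$. Let $\theta$ with $1<\theta<\frac{n}{n-2}$ and $\mu>\frac{n}{2}$ be such that $$\frac{l(2\mu-1)}{4\mu-n}<\frac{n(\theta+1-2\alpha\theta)+2\theta}{2n\theta+n^2-n^2\theta}.$$ Then there is $q_r\in[1,\infty)$ such that for all $q>q_r$, $$-\frac{2l\big(nq+\mu(4+n^2-2n(2+q))\big)}{n(4\mu-n)}<\frac{q\big(2n(\theta+1-2\alpha\theta)+4\theta\big)+2n\theta(\alpha-1)(n-2)}{2n\theta+n^2-n^2\theta}.$$
   Context: For $n=2$ the condition $1<\theta<\frac{n}{n-2}$ is understood as $\theta>1$. *)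

(* Defs.v *)
From mathcomp Require Import all_boot all_order all_algebra.

(* Main.v *)
Require Import Defs.
From mathcomp Require Import all_boot all_order all_algebra.
From mathcomp Require Import ring lra.
Import Order.TTheory GRing.Theory Num.Theory.
Local Open Scope ring_scope.

Theorem lemma4p5 (R : realFieldType) (n : nat) (l alpha theta mu : R) :
  (2 <= n)%N ->
  0 < l -> l < 2 / n%:R ->
  2 / n%:R <= alpha -> alpha < 1 + 1 / n%:R - l / 2 ->
  1 < theta -> ((2 < n)%N -> theta < n%:R / (n%:R - 2)) ->
  n%:R / 2 < mu ->
  l * (2 * mu - 1) / (4 * mu - n%:R) <
    (n%:R * (theta + 1 - 2 * alpha * theta) + 2 * theta) /
    (2 * n%:R * theta + n%:R ^+ 2 - n%:R ^+ 2 * theta) ->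
  exists qr : R, 1 <= qr /\
    forall q : R, qr < q ->
      - (2 * l * (n%:R * q + mu * (4 + n%:R ^+ 2 - 2 * n%:R * (2 + q))))
        / (n%:R * (4 * mu - n%:R))
      < (q * (2 * n%:R * (theta + 1 - 2 * alpha * theta) + 4 * theta)
         + 2 * n%:R * theta * (alpha - 1) * (n%:R - 2))
        / (2 * n%:R * theta + n%:R ^+ 2 - n%:R ^+ 2 * theta).
Proof.
move=> hn hl0 hl1 ha1 ha2 ht1 ht2 hmu hkey.
set N := n%:R.
have hN2 : 2 <= N by rewrite /N (ler_nat R 2 n).
have hM : 0 < 4 * mu - N by move: hmu; rewrite ltr_pdivrMr //; lra.
have hP : 0 < 2 * theta + N - N * theta.
  case: (ltnP 2 n) => h.
    have hN3 : 2 < N by rewrite /N (ltr_nat R 2 n).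
    have := ht2 h; rewrite ltr_pdivlMr; last by lra.
    rewrite -/N; lra.
  have -> : N = 2 by rewrite /N; have -> : n = 2%N by apply/eqP; rewrite eqn_leq h hn.
  lra.
have hD : 2 * N * theta + N ^+ 2 - N ^+ 2 * theta = N * (2 * theta + N - N * theta) by ring.
have hDp : 0 < N * (2 * theta + N - N * theta) by apply: mulr_gt0 => //; lra.
rewrite hD in hkey *.
set A := N * (theta + 1 - 2 * alpha * theta) + 2 * theta in hkey.
set D := N * (2 * theta + N - N * theta) in hkey hDp *.
set a := l * (2 * mu - 1) / (4 * mu - N) in hkey.
set s := 2 * (A / D) - 2 * a.
have hs : 0 < s by rewrite /s; lra.
set c := 2 * N * theta * (alpha - 1) * (N - 2) / D
        + 2 * l * mu * (N - 2) ^+ 2 / (N * (4 * mu - N)).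
exists (1 + `|c| / s); split.
  have : 0 <= `|c| / s by apply: divr_ge0 => //; exact: ltW.
  lra.
move=> q hq.
have hNM : N * (4 * mu - N) != 0 by apply: lt0r_neq0; apply: mulr_gt0 => //; lra.
have hM0 : 4 * mu - N != 0 by apply: lt0r_neq0.
have hD0 : D != 0 by apply: lt0r_neq0.
have hN0 : N != 0 by apply: lt0r_neq0; lra.
have eL : - (2 * l * (N * q + mu * (4 + N ^+ 2 - 2 * N * (2 + q)))) / (N * (4 * mu - N))
   = q * (2 * a) - 2 * l * mu * (N - 2) ^+ 2 / (N * (4 * mu - N)).
  rewrite /a; field; apply/andP; split => //.
have eR : (q * (2 * N * (theta + 1 - 2 * alpha * theta) + 4 * theta)
         + 2 * N * theta * (alpha - 1) * (N - 2)) / D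
   = q * (2 * (A / D)) + 2 * N * theta * (alpha - 1) * (N - 2) / D.
  rewrite /A; field => //.
rewrite eL eR.
suff : - c < q * s.
  rewrite /s /c; lra.
have hq' : `|c| / s < q - 1 by lra.
have : `|c| < (q - 1) * s by rewrite -ltr_pdivrMr.
have := ler_normr c.
have : -c <= `|c| by rewrite -normrN ler_norm.
have : 0 < s by [].
nra.
Qed.
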